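(* Let $V$ be a quasi-regular mixed lattice vector space, let $A$ be an ideal of $V$ and put $W=A_{sp}-A_{sp}$. Then $W$ is a quasi-ideal, and there is no ideal $B$ of $V$ with $W\subseteq B\subseteq A$ and $B\neq A$. In particular, if $W$ is an ideal then $W=A$.
   Context: A mixed lattice vector space is a real vector space $V$ with two partial orderings $\le$ (initial) and $\preceq$ (specific), each compatible with the vector space structure ($x\le y\Rightarrow x+z\le y+z$ and $\alpha x\le\alpha y$ for $\alpha\ge 0$; likewise for $\preceq$), such that for all $x,y$ the mixed lower envelope $x\curlywedge y=\max\{w: w\preceq x,\ w\le y\}$ and mixed upper envelope $x\curlyvee y=\min\{w: x\preceq w,\ y\le w\}$ exist (max/min with respect to $\le$). Let $V_p=\{x:0\le x\}$, $V_{sp}=\{x:0\preceq x\}$ and for $E\subseteq V$, $E_p=E\cap V_p$, $E_{sp}=E\cap V_{sp}$. $V$ is quasi-regular if $V_{sp}$ is closed under $\curlywedge,\curlyvee$. A mixed lattice subspace is a linear subspace closed under $\curlywedge$ and $\curlyvee$. An ideal is a mixed lattice subspace $A$ that is $(\le)$-order convex ($x\le z\le y$, $x,y\in A$ imply $z\in A$). A quasi-ideal is a mixed lattice subspace $A$ that is mixed-order convex: $y\in A$ and $0\preceq x\le y$ imply $x\in A$. *)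

(* Defs.v *)
From mathcomp Require Import all_boot all_order all_algebra.
From mathcomp Require Import reals.
Set Implicit Arguments. Unset Strict Implicit. Unset Printing Implicit Defensive.
Import Order.TTheory GRing.Theory Num.Theory.
Local Open Scope ring_scope.

Section MixedLattice.
Variables (R : realType) (V : lmodType R).

Definition partial_order (r : V -> V -> Prop) : Prop :=
  (forall x, r x x) /\
  (forall x y, r x y -> r y x -> x = y) /\
  (forall x y z, r x y -> r y z -> r x z).

Definition vs_compatible (r : V -> V -> Prop) : Prop :=
  (forall x y z, r x y -> r (x + z) (y + z)) /\
  (forall (a : R) x y, 0 <= a -> r x y -> r (a *: x) (a *: y)).

(* Mixed lattice vector space with initial order [le], specific order [sle],
   mixed lower envelope [mlow x y = x ⋏ y] and mixed upper envelope
   [mup x y = x ⋎ y], characterized as max/min w.r.t. [le]. *)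
Definition mixed_lattice_space (le sle : V -> V -> Prop)
  (mlow mup : V -> V -> V) : Prop :=
  partial_order le /\ vs_compatible le /\
  partial_order sle /\ vs_compatible sle /\
  (forall x y, sle (mlow x y) x /\ le (mlow x y) y /\
     (forall w, sle w x -> le w y -> le w (mlow x y))) /\
  (forall x y, sle x (mup x y) /\ le y (mup x y) /\
     (forall w, sle x w -> le y w -> le (mup x y) w)).

Definition quasi_regular (sle : V -> V -> Prop) (mlow mup : V -> V -> V) : Prop :=
  forall x y, sle 0 x -> sle 0 y -> sle 0 (mlow x y) /\ sle 0 (mup x y).

Definition linear_subspace (A : V -> Prop) : Prop :=
  A 0 /\ (forall x y, A x -> A y -> A (x + y)) /\
  (forall (a : R) x, A x -> A (a *: x)).

Definition mixed_lattice_subspace (mlow mup : V -> V -> V) (A : V -> Prop) : Prop :=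
  linear_subspace A /\
  (forall x y, A x -> A y -> A (mlow x y) /\ A (mup x y)).

Definition ideal (le : V -> V -> Prop) (mlow mup : V -> V -> V) (A : V -> Prop) : Prop :=
  mixed_lattice_subspace mlow mup A /\
  (forall x y z, A x -> A y -> le x z -> le z y -> A z).

Definition quasi_ideal (le sle : V -> V -> Prop) (mlow mup : V -> V -> V)
  (A : V -> Prop) : Prop :=
  mixed_lattice_subspace mlow mup A /\
  (forall x y, A y -> sle 0 x -> le x y -> A x).

Definition sp_diff (sle : V -> V -> Prop) (A : V -> Prop) : V -> Prop :=
  fun w => exists a b, A a /\ sle 0 a /\ A b /\ sle 0 b /\ w = a - b.

Definition psubset (A B : V -> Prop) : Prop := forall x, A x -> B x.
Definition set_eq (A B : V -> Prop) : Prop := forall x, A x <-> B x.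

End MixedLattice.

(* Main.v *)
Require Import Defs.
From mathcomp Require Import all_boot all_order all_algebra.
From mathcomp Require Import reals.
Import Order.TTheory GRing.Theory Num.Theory.
Local Open Scope ring_scope.

Theorem theorem4p12 (R : realType) (V : lmodType R)
  (le sle : V -> V -> Prop) (mlow mup : V -> V -> V)
  (HV : mixed_lattice_space le sle mlow mup)
  (Hqr : quasi_regular sle mlow mup)
  (A : V -> Prop) (HA : ideal le mlow mup A) :
  quasi_ideal le sle mlow mup (sp_diff sle A) /\
  (forall B : V -> Prop, ideal le mlow mup B ->
     psubset (sp_diff sle A) B -> psubset B A -> set_eq B A) /\
  (ideal le mlow mup (sp_diff sle A) -> set_eq (sp_diff sle A) A).
Proof.
move: HV => [[lrefl [lanti ltrans]] [[ladd lscale] [[srefl [santi strans]]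
  [[sadd sscale] [Hlow Hup]]]]].
move: HA => [[[A0 [AD AZ]] Aenv] Aconv].
have AN : forall x, A x -> A (- x).
  by move=> x Ax; rewrite -scaleN1r; apply: AZ.
have AB : forall x y, A x -> A y -> A (x - y).
  by move=> x y Ax Ay; apply: AD => //; apply: AN.
have tlow : forall x y z, mlow (x + z) (y + z) = mlow x y + z.
  move=> x y z; apply: lanti.
    set m := mlow (x + z) (y + z).
    have h1 : sle (m - z) x.
      by have := sadd _ _ (- z) (Hlow (x + z) (y + z)).1; rewrite addrK.
    have h2 : le (m - z) y.
      by have := ladd _ _ (- z) (Hlow (x + z) (y + z)).2.1; rewrite addrK.
    have := ladd _ _ z ((Hlow x y).2.2 _ h1 h2); by rewrite subrK.
  apply: (Hlow (x + z) (y + z)).2.2.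
    exact: sadd (Hlow x y).1.
  exact: ladd (Hlow x y).2.1.
have tup : forall x y z, mup (x + z) (y + z) = mup x y + z.
  move=> x y z; apply: lanti.
    apply: (Hup (x + z) (y + z)).2.2.
      exact: sadd (Hup x y).1.
    exact: ladd (Hup x y).2.1.
  set m := mup (x + z) (y + z).
  have h1 : sle x (m - z).
    by have := sadd _ _ (- z) (Hup (x + z) (y + z)).1; rewrite addrK.
  have h2 : le y (m - z).
    by have := ladd _ _ (- z) (Hup (x + z) (y + z)).2.1; rewrite addrK.
  have := ladd _ _ z ((Hup x y).2.2 _ h1 h2); by rewrite subrK.
have sp0 : forall p, sle 0 p -> le 0 p.
  move=> p hp.
  have hm := (Hqr 0 p (srefl 0) hp).1.
  have [h1 [h2 _]] := Hlow 0 p.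
  have e : mlow 0 p = 0 by apply: santi.
  by rewrite -e.
have sD : forall a c, sle 0 a -> sle 0 c -> sle 0 (a + c).
  move=> a c ha hc; apply: strans hc _.
  by have := sadd _ _ c ha; rewrite add0r.
have WA : forall w, sp_diff sle A w -> A w.
  by move=> w [a [b [Aa [_ [Ab [_ ->]]]]]]; apply: AB.
have Wsp : forall a, A a -> sle 0 a -> sp_diff sle A a.
  by move=> a Aa ha; exists a, 0; split=> //; split=> //; split=> //; split=> //; rewrite subr0.
have Wenv : forall x y, sp_diff sle A x -> sp_diff sle A y ->
    sp_diff sle A (mlow x y) /\ sp_diff sle A (mup x y).
  move=> x y [a [b [Aa [ha [Ab [hb ->]]]]]] [c [d [Ac [hc [Ad [hd ->]]]]]].
  have ex : a - b + (b + d) = a + d by rewrite addrA subrK.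
  have ey : c - d + (b + d) = c + b by rewrite (addrC b d) addrA subrK.
  have hz : forall u, u = u + (b + d) - (b + d) by move=> u; rewrite addrK.
  split.
    rewrite (hz (mlow _ _)) -tlow ex ey.
    exists (mlow (a + d) (c + b)), (b + d).
    split; first by apply: (Aenv _ _ (AD _ _ Aa Ad) (AD _ _ Ac Ab)).1.
    split; first by apply: (Hqr _ _ (sD _ _ ha hd) (sD _ _ hc hb)).1.
    by split; [apply: AD | split; [apply: sD|]].
  rewrite (hz (mup _ _)) -tup ex ey.
  exists (mup (a + d) (c + b)), (b + d).
  split; first by apply: (Aenv _ _ (AD _ _ Aa Ad) (AD _ _ Ac Ab)).2.
  split; first by apply: (Hqr _ _ (sD _ _ ha hd) (sD _ _ hc hb)).2.
  by split; [apply: AD | split; [apply: sD|]].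
have Wsub : linear_subspace (sp_diff sle A).
  split; first by apply: Wsp.
  split.
    move=> x y [a [b [Aa [ha [Ab [hb ->]]]]]] [c [d [Ac [hc [Ad [hd ->]]]]]].
    exists (a + c), (b + d); do !split; try by [apply: AD | apply: sD].
    by rewrite opprD addrACA.
  move=> r x [a [b [Aa [ha [Ab [hb ->]]]]]].
  have sZ : forall (s : R) u, 0 <= s -> sle 0 u -> sle 0 (s *: u).
    by move=> s u hs hu; have := sscale s _ _ hs hu; rewrite scaler0.
  case: (lerP 0 r) => hr.
    exists (r *: a), (r *: b); do !split; try by [apply: AZ | apply: sZ].
    by rewrite scalerBr.
  have hr' : 0 <= - r by rewrite oppr_ge0 ltW.
  exists ((- r) *: b), ((- r) *: a); do !split; try by [apply: AZ | apply: sZ].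
  by rewrite !scaleNr scalerBr opprK addrC.
have part2 : forall B : V -> Prop, ideal le mlow mup B ->
     psubset (sp_diff sle A) B -> psubset B A -> set_eq B A.
  move=> B [_ Bconv] WB BA x; split; first exact: BA.
  move=> Ax.
  have [hu1 [hu2 _]] := Hup 0 x.
  have [hv1 [hv2 _]] := Hlow 0 x.
  apply: (Bconv (mlow 0 x) (mup 0 x)) => //; apply: WB.
    exists 0, (- mlow 0 x); split => //; split => //.
    split; first by apply: AN; apply: (Aenv _ _ A0 Ax).1.
    split; last by rewrite opprK add0r.
    by have := sadd _ _ (- mlow 0 x) hv1; rewrite subrr add0r.
  by apply: Wsp => //; apply: (Aenv _ _ A0 Ax).2.
split.
  split; first by split.
  move=> x y [a [b [Aa [ha [Ab [hb ->]]]]]] hx hxy.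
  apply: Wsp => //.
  apply: (Aconv 0 a) => //; first exact: sp0.
  apply: ltrans hxy _.
  by have := ladd _ _ (a - b) (sp0 _ hb); rewrite add0r (addrC b) subrK.
split; first exact: part2.
move=> HW; apply: (part2 _ HW) => //.
Qed.
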